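(* Let $\rho = (\mathcal{V}, V, \mathbf{1}, \mathrm{var}, \mathrm{low}, \mathrm{high}, \mathrm{flip})$ be a COBDD with $\mathcal V=\{x_1,\dots,x_n\}$, let $v_1, \ldots, v_r \in V$ be nodes and $b_1, \ldots, b_r \in \mathbb{B}$ flipping bits. Then the node-translation part of GenerateCCode$(\rho, v_1, b_1, \ldots, v_r, b_r)$ (namely: $W:=\emptyset$, then for $i=1,\dots,r$, $W :=$ Translate$(\rho, v_i, W)$) generates a sequence of labeled C statements $B_1 \ldots B_k$ such that $k = |\bigcup_{i=1}^r V_{v_i}|$ and for all $v \in \bigcup_{i=1}^r V_{v_i}$: (1) the label L_$v$ occurs in $B_j$ for some $j$; and (2) for every $b\in\mathbb B$, if execution is started at label L_$v$ with x[$j-1$] $= x_j$ for all $j \in\{1,\dots,n\}$ and ret_b $= \bar b$, then a statement ''return ret_b;'' is executed within $O(p)$ steps, with ret_b $= [\![ v, b]\!]$ evaluated at $(x_1,\dots,x_n)$, where $p = \mathrm{height}(v)$.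
   Context: $\mathbb{B}=\{0,1\}$. A COBDD is a tuple $\rho = (\mathcal{V}, V, \mathbf{1}, \mathrm{var}, \mathrm{low}, \mathrm{high}, \mathrm{flip})$ with $\mathcal V$ a finite totally ordered set of boolean variables, $V$ a finite set of nodes, $\mathbf 1\in V$ the terminal node, $\mathrm{var}: V\setminus\{\mathbf 1\}\to\mathcal V$, $\mathrm{high},\mathrm{low}: V\setminus\{\mathbf 1\}\to V$, $\mathrm{flip}: V\setminus\{\mathbf 1\}\to\mathbb B$, with variables strictly increasing along edges $v\to\mathrm{high}(v)$ and $v\to\mathrm{low}(v)$; COBDDs are assumed reduced (no internal $v$ with $\mathrm{low}(v)=\mathrm{high}(v)$ and $\mathrm{flip}(v)=0$, no two distinct nodes with isomorphic reachable sub-COBDDs). $V_v$ is the set of nodes reachable from $v$ (including $v$); $\mathrm{height}(v)$ is the length of the longest path from $v$ to $\mathbf 1$. Semantics: $[\![ \mathbf 1, b]\!] := \bar b$ and, for internal $v$ with $\mathrm{var}(v)=x_i$, $[\![ v,b]\!] := x_i [\![ \mathrm{high}(v), b]\!] + \bar x_i [\![ \mathrm{low}(v), b\oplus \mathrm{flip}(v)]\!]$. The procedure Translate$(\rho,v,W)$: if $v\in W$, return $W$ (printing nothing); otherwise set $W := W\cup\{v\}$; print the label ''L_$v$:''; if $v=\mathbf 1$, print ''return ret_b;''; otherwise, with $i$ such that $\mathrm{var}(v)=x_i$, print ''if (x[$i-1$] == 1) goto L_$\mathrm{high}(v)$;'' followed by ''else {ret_b = !ret_b; goto L_$\mathrm{low}(v)$;}''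 if $\mathrm{flip}(v)=1$ or ''else goto L_$\mathrm{low}(v)$;'' if $\mathrm{flip}(v)=0$, then set $W:=$ Translate$(\rho,\mathrm{high}(v),W)$ and then $W:=$ Translate$(\rho,\mathrm{low}(v),W)$; return $W$. Each node has a unique label L_$v$. Steps are counted as executed C statements. *)

(* Defs.v *)
From mathcomp Require Import all_boot.
Set Implicit Arguments. Unset Strict Implicit. Unset Printing Implicit Defensive.

(* Variables are
   x_1 < ... < x_n, represented by their indices 1..n (nat order).
   var, low, high, flip are total functions; their values on the terminal
   node [one] are irrelevant. *)
Record cobdd (V : finType) := COBDD {
  one  : V;
  var  : V -> nat;
  low  : V -> V;
  high : V -> V;
  flip : V -> bool }.

Section Cobdd.
Variable V : finType.
Variable rho : cobdd V.
Local Notation one := (one rho).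
Local Notation var := (var rho).
Local Notation low := (low rho).
Local Notation high := (high rho).
Local Notation flip := (flip rho).

Definition edge : rel V :=
  fun u w => (u != one) && ((w == low u) || (w == high u)).

Definition reach (v : V) : {set V} := [set w | connect edge v w].

Definition cobdd_wf (n : nat) : Prop :=
  (forall v, v != one -> 1 <= var v <= n) /\
  (forall v, v != one -> high v != one -> var v < var (high v)) /\
  (forall v, v != one -> low v != one -> var v < var (low v)).

Definition sub_iso (u w : V) : Prop :=
  exists f : V -> V,
    [/\ {in reach u &, injective f}, f @: reach u = reach w, f u = w &
      {in reach u, forall z,
        (f z == one) = (z == one) /\
        (z != one -> [/\ var (f z) = var z, f (low z) = low (f z),
                         f (high z) = high (f z) & flip (f z) = flip z])}].

Definition cobdd_reduced : Prop :=
  (forall v, v != one -> ~ (low v = high v /\ flip v = false)) /\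
  (forall u w, sub_iso u w -> u = w).

(* height: length of the longest path from v to the terminal
   (fuel-based recursion; fuel #|V| suffices for ordered COBDDs) *)
Fixpoint height_f (f : nat) (v : V) : nat :=
  if v == one then 0 else
  match f with
  | 0 => 0
  | f'.+1 => (maxn (height_f f' (high v)) (height_f f' (low v))).+1
  end.
Definition height (v : V) : nat := height_f #|V| v.

(* semantics [[v, b]] at the assignment x (x j = value of x_j) *)
Fixpoint eval_f (f : nat) (x : nat -> bool) (v : V) (b : bool) : bool :=
  if v == one then ~~ b else
  match f with
  | 0 => false
  | f'.+1 => if x (var v) then eval_f f' x (high v) b
             else eval_f f' x (low v) (b (+) flip v)
  end.
Definition eval (x : nat -> bool) (v : V) (b : bool) : bool := eval_f #|V| x v b.

(* SReturn           ==  "return ret_b;"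
   SIf i h fl l      ==  "if (x[i] == 1) goto L_h;"  followed by
                         "else {ret_b = !ret_b; goto L_l;}"  if fl
                         "else goto L_l;"                    otherwise *)
Inductive stmt := SReturn | SIf of nat & V & bool & V.
Definition block := (V * stmt)%type.

Definition block_of (v : V) : block :=
  if v == one then (v, SReturn)
  else (v, SIf (var v).-1 (high v) (flip v) (low v)).

Fixpoint translate_f (f : nat) (v : V) (W : {set V}) : {set V} * seq block :=
  if v \in W then (W, [::]) else
  let W1 := v |: W in
  if v == one then (W1, [:: block_of v]) else
  match f with
  | 0 => (W1, [:: block_of v])
  | f'.+1 =>
      let (W2, o2) := translate_f f' (high v) W1 in
      let (W3, o3) := translate_f f' (low v) W2 in
      (W3, block_of v :: o2 ++ o3)
  end.
Definition translate (v : V) (W : {set V}) := translate_f #|V| v W.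

Fixpoint gen_from (W : {set V}) (vs : seq V) : seq block :=
  match vs with
  | [::] => [::]
  | v :: vs' => let (W', o) := translate v W in o ++ gen_from W' vs'
  end.
Definition gen_nodes (vs : seq V) : seq block := gen_from set0 vs.

Definition lookup (prog : seq block) (v : V) : option stmt :=
  omap snd (ohead [seq bl <- prog | bl.1 == v]).

(* runs prog arr v ret k r : started at label L_v with array x[] = arr and
   ret_b = ret, execution reaches and executes "return ret_b;" after exactly
   k executed statements (counting: condition test 1, each goto 1, the
   assignment ret_b = !ret_b 1, the return 1), returning r. *)
Inductive runs (prog : seq block) (arr : nat -> bool)
  : V -> bool -> nat -> bool -> Prop :=
| run_ret v ret :
    lookup prog v = Some SReturn -> runs prog arr v ret 1 ret
| run_hi v ret i h fl l k r :
    lookup prog v = Some (SIf i h fl l) -> arr i = true ->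
    runs prog arr h ret k r -> runs prog arr v ret (k + 2) r
| run_lo v ret i h fl l k r :
    lookup prog v = Some (SIf i h fl l) -> arr i = false ->
    runs prog arr l (if fl then ~~ ret else ret) k r ->
    runs prog arr v ret (k + 2 + fl) r.

End Cobdd.

(* Main.v *)
Require Import Defs.
From mathcomp Require Import all_boot.
From mathcomp Require Import zify.

Section S.
Variable V : finType.
Variable rho : cobdd V.
Variable n : nat.
Hypothesis wf : cobdd_wf rho n.
Local Notation one := (Defs.one rho).
Local Notation var := (Defs.var rho).
Local Notation low := (Defs.low rho).
Local Notation high := (Defs.high rho).
Local Notation flip := (Defs.flip rho).
Local Notation reach := (Defs.reach rho).

Lemma edge_one w : edge rho one w = false.
Proof. by rewrite /edge eqxx. Qed.

Lemma path_one p : path (edge rho) one p -> last one p = one.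
Proof. by case: p => //= y p; rewrite edge_one. Qed.

Lemma reach_var a w : a != one -> connect (edge rho) a w -> (w == one) || (var a <= var w).
Proof.
move=> Ha /connectP [p]; elim: p a Ha => [|y p IH] a Ha /=.
  by move=> _ ->; rewrite leqnn orbT.
case/andP => /andP [_ Hy] Hp Hw.
case: (eqVneq y one) => [Ey|Ny].
  by rewrite Ey in Hp Hw; rewrite Hw path_one // eqxx.
have Hlt : var a < var y.
  by move: Ny; case/orP: Hy => /eqP -> Ny; [apply wf.2.2 | apply wf.2.1].
case/orP: (IH y Ny Hp Hw) => [->//|Hyw].
by rewrite (leq_trans (ltnW Hlt) Hyw) orbT.
Qed.

Arguments reach_var {a w}.

Lemma reach_one : reach one = [set one].
Proof.
apply/setP => w; rewrite !inE; apply/idP/idP.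
  by move/connectP => [p Hp ->]; rewrite path_one.
by move/eqP->; exact: connect0.
Qed.

Lemma reach_refl u : u \in reach u.
Proof. by rewrite inE connect0. Qed.

Lemma reach_trans u w : w \in reach u -> reach w \subset reach u.
Proof.
rewrite inE => Huw; apply/subsetP => z; rewrite !inE; exact: connect_trans.
Qed.

Lemma edge_hi u : u != one -> edge rho u (high u).
Proof. by rewrite /edge => ->; rewrite eqxx orbT. Qed.

Lemma edge_lo u : u != one -> edge rho u (low u).
Proof. by rewrite /edge => ->; rewrite eqxx. Qed.

Arguments reach_trans {u w}.
Lemma child_reach u c : edge rho u c -> reach c \subset reach u.
Proof. move=> H; apply: reach_trans; rewrite inE; exact: connect1. Qed.

Arguments child_reach {u c}.
Lemma notin_child u c : u != one -> edge rho u c -> u \notin reach c.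
Proof.
move=> Hu Hc; case: (eqVneq c one) => [->|Nc]; first by rewrite reach_one inE.
rewrite inE; apply/negP => /(reach_var Nc); rewrite (negbTE Hu) /=.
have : var u < var c.
  move: Hc; rewrite /edge Hu /= => /orP [] /eqP Ec; rewrite Ec.
    by apply wf.2.2 => //; rewrite -Ec.
  by apply wf.2.1 => //; rewrite -Ec.
by rewrite ltnNge => /negbTE ->.
Qed.

Arguments notin_child {u c}.
Arguments child_reach {u c}.
Arguments edge_hi {u}.
Arguments edge_lo {u}.
Arguments reach_trans {u w}.

Lemma card_child u c : u != one -> edge rho u c -> #|reach c| < #|reach u|.
Proof.
move=> Hu Hc; apply: proper_card; rewrite properE child_reach //=.
apply/subsetPn; exists u; [exact: reach_refl | exact: notin_child].
Qed.

Arguments reach_trans {u w}.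
Arguments edge_hi {u}.
Arguments edge_lo {u}.
Arguments child_reach {u c}.
Arguments notin_child {u c}.
Arguments card_child {u c}.

Lemma reach_split u : u != one -> reach u = u |: (reach (high u) :|: reach (low u)).
Proof.
move=> Hu; apply/setP => w; rewrite !inE; apply/idP/idP.
  move/connectP => [[|y p]] /=; first by move=> _ ->; rewrite eqxx.
  case/andP => /andP [_ Hy] Hp Hw; apply/orP; right.
  case/orP: Hy => /eqP Ey; [apply/orP; right | apply/orP; left];
    apply/connectP; exists p => //; by rewrite -Ey.
case/or3P => [/eqP ->|H|H]; first exact: connect0.
  exact: connect_trans (connect1 (edge_hi Hu)) H.
exact: connect_trans (connect1 (edge_lo Hu)) H.
Qed.

Lemma block_fst w : (block_of rho w).1 = w.
Proof. by rewrite /block_of; case: ifP. Qed.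

Lemma lookup_map s v : v \in s ->
  lookup (map (block_of rho) s) v = Some (block_of rho v).2.
Proof.
elim: s => // w s IH; rewrite inE => Hv.
rewrite /lookup /= block_fst; case: (eqVneq w v) => [->//|Nw].
by apply: IH; case/orP: Hv => // /eqP E; rewrite E eqxx in Nw.
Qed.

Lemma translateP f u (W : {set V}) : #|reach u| <= f ->
  (forall w, w \in W -> w \in reach u -> reach w \subset W) ->
  let: (W', o) := translate_f rho f u W in
  [/\ W' = W :|: reach u, uniq (map fst o), map fst o =i W' :\: W &
      o = map (block_of rho) (map fst o)].
Proof.
elim: f u W => [|f IH] u W Hf Hcl.
  by move: Hf; rewrite leqn0 cards_eq0 => /eqP E; move: (reach_refl u); rewrite E inE.
rewrite /=; case: ifP => HuW.
  have Hsub := Hcl u HuW (reach_refl u).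
  split => //; first by apply/esym/setUidPl.
  by move=> z; rewrite /= in_nil setDv inE.
case: (eqVneq u one) => [Eu|Nu].
  rewrite Eu /= block_fst; rewrite Eu in HuW.
  split => //.
  - by rewrite reach_one setUC.
  - by move=> z; rewrite !inE; case: (eqVneq z one) => [->|_] /=; [rewrite HuW | case: (z \in W)].
have Hhi := card_child Nu (edge_hi Nu).
have Hlo := card_child Nu (edge_lo Nu).
have Hf1 : #|reach (high u)| <= f by rewrite -ltnS (leq_trans Hhi Hf).
have Hc1 : forall w, w \in u |: W -> w \in reach (high u) -> reach w \subset u |: W.
  move=> w; rewrite in_setU1 => /orP [/eqP ->|HwW] Hw.
    by rewrite (negbTE (notin_child Nu (edge_hi Nu))) in Hw.
  apply: subset_trans (Hcl w HwW _) _; first exact: (subsetP (child_reach (edge_hi Nu))).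
  by apply/subsetP => z Hz; rewrite !inE Hz !orbT.
have := IH (high u) (u |: W) Hf1 Hc1.
case: (translate_f _ _ _ _) => W2 o2 [EW2 U2 M2 G2].
have Hf2 : #|reach (low u)| <= f by rewrite -ltnS (leq_trans Hlo Hf).
have Hc2 : forall w, w \in W2 -> w \in reach (low u) -> reach w \subset W2.
  rewrite EW2 => w; rewrite in_setU => /orP [Hw1|Hwh] Hw.
    rewrite in_setU1 in Hw1; case/orP: Hw1 => [/eqP Ew|HwW].
      by rewrite Ew (negbTE (notin_child Nu (edge_lo Nu))) in Hw.
    apply: subset_trans (Hcl w HwW _) _; first exact: (subsetP (child_reach (edge_lo Nu))).
    by apply/subsetP => z Hz; rewrite !inE Hz !orbT.
  exact: subset_trans (reach_trans Hwh) (subsetUr _ _).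
have := IH (low u) W2 Hf2 Hc2.
case: (translate_f _ _ _ _) => W3 o3 [EW3 U3 M3 G3].
rewrite (reach_split u Nu).
move: EW2 EW3 M2 M3; move: (reach (high u)) (reach (low u)) => A B EW2 EW3 M2 M3.
rewrite /=; split.
- rewrite EW3 EW2; apply/setP => z; rewrite !inE.
  by case: (z \in W); case: (z == u); case: (z \in A); case: (z \in B).
- rewrite block_fst map_cat cat_uniq U2 U3 mem_cat M2 M3 EW3 EW2 !inE eqxx /= andbT.
  apply/hasPn => z; rewrite M3 M2 EW3 EW2 !inE.
  by case: (z \in W); case: (z == u); case: (z \in A); case: (z \in B).
- move=> z; rewrite block_fst map_cat inE mem_cat M2 M3 EW3 EW2 !inE.
  case: (eqVneq z u) => [->|_]; rewrite ?HuW /=.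
    by case: (u \in A); case: (u \in B).
  by case: (z \in W); case: (z \in A); case: (z \in B).
- by rewrite block_fst map_cat map_cat -G2 -G3.
Qed.

Lemma genP vs (W : {set V}) : (forall w, w \in W -> reach w \subset W) ->
  [/\ uniq (map fst (gen_from rho W vs)),
      map fst (gen_from rho W vs) =i (W :|: \bigcup_(v <- vs) reach v) :\: W &
      gen_from rho W vs = map (block_of rho) (map fst (gen_from rho W vs))].
Proof.
elim: vs W => [|v vs IH] W Hcl.
  by split => // z; rewrite /= big_nil setU0 setDv in_nil inE.
rewrite /= /translate.
have := translateP #|V| v W (max_card _) (fun w Hw _ => Hcl w Hw).
case: (translate_f _ _ _ _) => W' o [EW' U1 M1 G1].
have HclW : forall w, w \in W' -> reach w \subset W'.
  move=> w; rewrite EW' inE => /orP [Hw|Hw].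
    exact: subset_trans (Hcl w Hw) (subsetUl _ _).
  exact: subset_trans (reach_trans Hw) (subsetUr _ _).
have [U2 M2 G2] := IH W' HclW.
split.
- rewrite map_cat cat_uniq U1 U2 /= andbT.
  apply/hasPn => z; rewrite M2 M1 EW'.
  move: (reach v) (\bigcup_(v0 <- vs) reach v0) => A B; rewrite !inE.
  by case: (z \in W); case: (z \in A).
- move=> z; rewrite map_cat mem_cat M1 M2 EW' big_cons.
  move: (reach v) (\bigcup_(v0 <- vs) reach v0) => A B; rewrite !inE.
  by case: (z \in W); case: (z \in A); case: (z \in B).
- by rewrite map_cat map_cat -G1 -G2.
Qed.

Lemma closedU vs w : w \in \bigcup_(v <- vs) reach v ->
  reach w \subset \bigcup_(v <- vs) reach v.
Proof.
elim: vs => [|v vs IH]; first by rewrite big_nil inE.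
rewrite big_cons inE => /orP [Hw|Hw].
  exact: subset_trans (reach_trans Hw) (subsetUl _ _).
exact: subset_trans (IH Hw) (subsetUr _ _).
Qed.

Lemma runP B arr x (Harr : forall j, 1 <= j <= n -> arr j.-1 = x j) f v b :
  #|reach v| <= f ->
  (forall w, w \in reach v -> lookup B w = Some (block_of rho w).2) ->
  exists k, runs B arr v (~~ b) k (eval_f rho f x v b) /\
            k <= 3 * height_f rho f v + 1.
Proof.
elim: f v b => [|f IH] v b Hf Hl.
  by move: Hf; rewrite leqn0 cards_eq0 => /eqP E; move: (reach_refl v); rewrite E inE.
have Hv := Hl v (reach_refl v).
case: (eqVneq v one) => [Ev|Nv].
  exists 1; rewrite /= Ev eqxx; split => //; apply: run_ret.
  by rewrite -Ev Hv /block_of Ev eqxx.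
rewrite /= (negbTE Nv).
rewrite /block_of (negbTE Nv) /= in Hv.
have Harr' : arr (var v).-1 = x (var v) := Harr _ (wf.1 v Nv).
case Hx: (x (var v)).
  have [k [Hk Kb]] := IH (high v) b (leq_trans (card_child Nv (edge_hi Nv)) Hf)
    (fun w Hw => Hl w (subsetP (child_reach (edge_hi Nv)) w Hw)).
  exists (k + 2); split; first by apply: (run_hi Hv) => //; rewrite Harr'.
  have := leq_maxl (height_f rho f (high v)) (height_f rho f (low v)); lia.
have [k [Hk Kb]] := IH (low v) (b (+) flip v) (leq_trans (card_child Nv (edge_lo Nv)) Hf)
  (fun w Hw => Hl w (subsetP (child_reach (edge_lo Nv)) w Hw)).
exists (k + 2 + flip v); split.
  apply: (run_lo Hv); first by rewrite Harr'.
  have -> : (if flip v then ~~ ~~ b else ~~ b) = ~~ (b (+) flip v) by case: (flip v); rewrite ?addbT ?addbF.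
  exact: Hk.
have := leq_maxr (height_f rho f (high v)) (height_f rho f (low v)).
have : (flip v : nat) <= 1 by case: (flip v).
lia.
Qed.

End S.

Theorem lemma4 :
  exists c : nat,
  forall (V : finType) (rho : cobdd V) (n : nat),
    cobdd_wf rho n -> cobdd_reduced rho ->
  forall (vs : seq V) (bs : seq bool), size bs = size vs ->
  let B := gen_nodes rho vs in
  let U := \bigcup_(v <- vs) reach rho v in
  size B = #|U| /\
  forall v, v \in U ->
    (exists j, j < size B /\ (nth (v, SReturn V) B j).1 = v) /\
    forall (x arr : nat -> bool) (b : bool),
      (forall j, 1 <= j <= n -> arr j.-1 = x j) ->
      exists k r, runs B arr v (~~ b) k r /\
                  k <= c * (height rho v).+1 /\
                  r = eval rho x v b.
Proof.
exists 3 => V rho n wf _ vs bs _ B U.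
have [Uq M G] := @genP V rho n wf vs set0 (fun w (H : w \in set0) => ltac:(by rewrite inE in H)).
have MU : forall z, (z \in map fst B) = (z \in U).
  by move=> z; rewrite /B /gen_nodes M set0U setD0.
split.
  move/card_uniqP: Uq => Hc.
  rewrite -(size_map fst) -Hc; apply: eq_card => z; exact: MU.
move=> v HvU; split.
  have Hj : index v (map fst B) < size B by rewrite -(size_map fst) index_mem MU.
  exists (index v (map fst B)); split => //.
  by rewrite -(nth_map _ v) // nth_index // MU.
move=> x arr b Harr.
have Hl : forall w, w \in reach rho v -> lookup B w = Some (block_of rho w).2.
  move=> w Hw; rewrite /B /gen_nodes G; apply: lookup_map.
  change (w \in map fst B); rewrite MU; exact: (subsetP (@closedU V rho vs v HvU) w Hw).
have [k [Hk Kb]] := @runP V rho n wf B arr x Harr #|V| v b (max_card _) Hl.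
exists k, (eval rho x v b); rewrite /eval /height; split; first exact: Hk.
split; last by [].
by apply: leq_trans Kb _; rewrite mulnS (addnC 3) leq_add2l.
Qed.
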